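(* Let $\Gamma$ be a graph such that $\chi(\overline{\Gamma})=k$. Suppose $F$ is a bipartite graph on $k$ vertices which does not contain $K_{s,r}$ as a subgraph, for some integers $2\le s\le r$ with $r\ne 2$. Then $\Gamma$ has a subgraph $G$ with at least $e(\Gamma)e(F)/\binom{k}{2}$ edges that does not contain $K_{s,r}$ as an induced subgraph.
   Context: $\overline{\Gamma}$ is the complement of $\Gamma$ and $\chi$ denotes chromatic number. *)

(* Defs.v *)
From mathcomp Require Import all_boot.
Set Implicit Arguments. Unset Strict Implicit. Unset Printing Implicit Defensive.

Section Graphs.
Variable V : finType.

Definition simple_graph (e : rel V) : Prop := symmetric e /\ irreflexive e.

Definition compl_graph (e : rel V) : rel V := fun x y => (x != y) && ~~ e x y.

Definition colorable (e : rel V) (k : nat) : Prop :=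
  exists f : V -> 'I_k, forall x y, e x y -> f x != f y.

Definition chromatic_number_is (e : rel V) (k : nat) : Prop :=
  colorable e k /\ forall j, colorable e j -> k <= j.

Definition nedges (e : rel V) : nat :=
  #|[set E : {set V} | [exists x, exists y, e x y && (E == [set x; y])]]|.

Definition bipartite (e : rel V) : Prop :=
  exists c : V -> bool, forall x y, e x y -> c x != c y.

Definition subgraph (e' e : rel V) : Prop :=
  simple_graph e' /\ forall x y, e' x y -> e x y.

Definition contains_Ksr (e : rel V) (s r : nat) : Prop :=
  exists A B : {set V}, [/\ [disjoint A & B], #|A| = s, #|B| = r &
    forall a b, a \in A -> b \in B -> e a b].

Definition contains_induced_Ksr (e : rel V) (s r : nat) : Prop :=
  exists A B : {set V}, [/\ [disjoint A & B], #|A| = s, #|B| = r &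
    forall a b, a \in A -> b \in B -> e a b] /\ [/\
    forall a a', a \in A -> a' \in A -> ~~ e a a' &
    forall b b', b \in B -> b' \in B -> ~~ e b b'].

End Graphs.

(* Main.v *)
Require Import Defs.
From mathcomp Require Import all_boot.
From mathcomp Require Import fingroup perm.
From mathcomp Require Import zify.

Set Implicit Arguments. Unset Strict Implicit. Unset Printing Implicit Defensive.

Definition Ncount (T : finType) (e : rel T) : nat := \sum_x \sum_y (e x y : nat).

Lemma nedgesE (T : finType) (e : rel T) :
  symmetric e -> irreflexive e -> (nedges e).*2 = Ncount e.
Proof.
move=> sym irr; rewrite /Ncount /nedges.
set S := [set E : {set T} | _].
have -> : \sum_x \sum_y (e x y : nat) = \sum_(p : T * T | e p.1 p.2) 1.
  rewrite pair_big /= [RHS]big_mkcond /=; apply: eq_bigr => p _.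
  by case: (e _ _).
rewrite (partition_big (fun p : T * T => [set p.1; p.2]) (mem S)); last first.
  move=> p H; suff HS : [set p.1; p.2] \in S by exact: HS.
  rewrite /S inE; apply/existsP; exists p.1; apply/existsP; exists p.2.
  by rewrite H eqxx.
transitivity (\sum_(E in S) 2); first by rewrite sum_nat_const muln2.
apply: eq_bigr => E; rewrite /S inE => /existsP[x /existsP[y /andP[exy /eqP ->]]].
have xy : x != y by apply/eqP => Exy; rewrite Exy irr in exy.
rewrite sum1_card (eq_card (B := [set (x, y); (y, x)])); last first.
  move=> [u v]; rewrite !inE -topredE /=.
  apply/idP/idP.
  - move=> /andP[/= euv /eqP /= Huv]; move: euv.
    have: u \in [set x; y] by rewrite -Huv !inE eqxx.
    have: v \in [set x; y] by rewrite -Huv !inE eqxx orbT.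
    rewrite !inE => /orP[]/eqP-> /orP[]/eqP->; rewrite ?eqxx ?orbT ?irr //.
  - move=> /orP[]/eqP[-> ->] /=; first by rewrite exy eqxx.
    by rewrite sym exy setUC eqxx.
rewrite cards2; suff -> : (x, y) != (y, x) by [].
apply/eqP => [[Exy _]]; by rewrite Exy eqxx in xy.
Qed.

Section Avg.
Variable k : nat.
Variable F : rel 'I_k.
Hypothesis symF : symmetric F.
Hypothesis irrF : irreflexive F.

Definition Tab (a b : 'I_k) : nat := \sum_(sg : {perm 'I_k}) (F (sg a) (sg b) : nat).

Lemma Tab_const a b a' b' : a != b -> a' != b' -> Tab a b = Tab a' b'.
Proof.
move=> ab ab'.
pose t1 : {perm 'I_k} := tperm a' a.
pose t := (t1 * tperm (t1 b') b)%g.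
have t1b' : t1 b' != a.
  apply/eqP => E; have : t1 b' = t1 a' by rewrite E /t1 tpermL.
  by move/perm_inj => E'; rewrite E' eqxx in ab'.
have ta : tperm (t1 b') b (t1 a') = a.
  rewrite {2}/t1 tpermL tpermD //; by rewrite eq_sym.
have tb : tperm (t1 b') b (t1 b') = b by rewrite tpermL.
have inj : injective (fun sg : {perm 'I_k} => (t * sg)%g) by apply: mulgI.
rewrite /Tab [RHS](reindex_inj inj) /=.
by apply: eq_bigr => sg _; rewrite !permM ta tb.
Qed.

Lemma count_neq : \sum_(a : 'I_k) \sum_(b : 'I_k) ((a != b) : nat) = k * k.-1.
Proof.
have H : forall a : 'I_k, \sum_(b : 'I_k) ((a != b) : nat) = k.-1.
  move=> a; rewrite -big_mkcond /= sum1_card.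
  have -> : #|[pred b : 'I_k | a != b]| = #|predC1 a|.
    by apply: eq_card => b; rewrite !inE eq_sym.
  by rewrite cardC1 card_ord.
by rewrite (eq_bigr _ (fun a _ => H a)) sum_nat_const card_ord.
Qed.

Lemma Tab_val a b : a != b -> Tab a b * (k * k.-1) = k`! * Ncount F.
Proof.
move=> ab.
rewrite -count_neq big_distrr /=.
transitivity (\sum_(a' : 'I_k) \sum_(b' : 'I_k) Tab a' b').
  apply: eq_bigr => a' _; rewrite big_distrr /=; apply: eq_bigr => b' _.
  case: (eqVneq a' b') => [->|nab] /=.
    rewrite muln0 /Tab big1 // => sg _; by rewrite irrF.
  by rewrite muln1 (Tab_const ab nab).
rewrite /Tab.
rewrite (exchange_big_dep xpredT) //=.
under eq_bigr do rewrite exchange_big /=.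
rewrite exchange_big /=.
transitivity (\sum_(sg : {perm 'I_k}) Ncount F).
  apply: eq_bigr => sg _; rewrite /Ncount.
  rewrite exchange_big /= [RHS](reindex_inj (h := sg) perm_inj) /=.
  by apply: eq_bigr => a' _; rewrite [RHS](reindex_inj (h := sg) perm_inj).
by rewrite sum_nat_const card_Sn.
Qed.

Lemma NF_le : Ncount F <= k * k.-1.
Proof.
rewrite -count_neq /Ncount; apply: leq_sum => a _; apply: leq_sum => b _.
case: (eqVneq a b) => [->|]; first by rewrite irrF.
by case: (F a b).
Qed.

End Avg.


Definition Gs (V : finType) (Gamma : rel V) k (f : V -> 'I_k) (F : rel 'I_k)
  (sg : {perm 'I_k}) : rel V :=
  fun x y => Gamma x y && ((f x == f y) || F (sg (f x)) (sg (f y))).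

Lemma no_induced (V : finType) (Gamma : rel V) k (F : rel 'I_k) (f : V -> 'I_k)
  (sg : {perm 'I_k}) s r :
  (forall x y, compl_graph Gamma x y -> f x != f y) -> bipartite F ->
  2 <= s -> s <= r -> r != 2 -> ~ contains_Ksr F s r ->
  ~ contains_induced_Ksr (Gs Gamma f F sg) s r.
Proof.
move=> hf [c hc] s2 sr r2 noK [A [B [[dAB cA cB hAB] [iA iB]]]].
have hG : forall x y, x != y -> f x = f y -> Gamma x y.
  move=> x y nxy fxy; apply/negPn/negP => nG.
  by have := hf x y; rewrite /compl_graph nxy nG fxy eqxx => /(_ isT).
have injA : {in A &, injective f}.
  move=> a a' Ha Ha' fa; apply/eqP; apply/negPn/negP => naa.
  by have := iA a a' Ha Ha'; rewrite /Gs fa eqxx (hG a a' naa fa).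
have injB : {in B &, injective f}.
  move=> a a' Ha Ha' fa; apply/eqP; apply/negPn/negP => naa.
  by have := iB a a' Ha Ha'; rewrite /Gs fa eqxx (hG a a' naa fa).
have hE : forall a b, a \in A -> b \in B -> f a != f b -> F (sg (f a)) (sg (f b)).
  move=> a b Ha Hb nf; have := hAB a b Ha Hb; rewrite /Gs (negbTE nf) /=.
  by case/andP.
case: (boolP [exists a, exists b, [&& a \in A, b \in B & f a == f b]]).
- move=> /existsP[a /existsP[b /and3P[Ha Hb /eqP fab]]].
  have [a' Ha' naa] : exists2 a', a' \in A & a' != a.
    have := cardsD1 a A; rewrite Ha cA /= => H.
    have : 0 < #|A :\ a| by lia.
    by case/card_gt0P => x; rewrite !inE => /andP[nx Hx]; exists x.
  have [b1 Hb1 nb1] : exists2 b1, b1 \in B & b1 != b.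
    have := cardsD1 b B; rewrite Hb cB /= => H.
    have : 0 < #|B :\ b| by lia.
    by case/card_gt0P => x; rewrite !inE => /andP[nx Hx]; exists x.
  have [b2 [Hb2 nb2 nb21]] : exists b2, [/\ b2 \in B, b2 != b & b2 != b1].
    have := cardsD1 b B; rewrite Hb cB /= => H.
    have := cardsD1 b1 (B :\ b); rewrite !inE nb1 Hb1 /= => H1.
    have : 0 < #|B :\ b :\ b1| by lia.
    by case/card_gt0P => x; rewrite !inE => /and3P[nx1 nx Hx]; exists x.
  have [b' [Hb' nbb fb']] : exists b', [/\ b' \in B, b' != b & f a' != f b'].
    case: (eqVneq (f a') (f b1)) => e1; last by exists b1.
    exists b2; split => //; rewrite e1; apply/eqP => /(injB _ _ Hb1 Hb2) E.
    by rewrite E eqxx in nb21.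
  have faa : f a' != f a.
    by apply/eqP => /(injA _ _ Ha' Ha) E; rewrite E eqxx in naa.
  have fbb : f a != f b'.
    by rewrite fab; apply/eqP => /(injB _ _ Hb Hb') E; rewrite E eqxx in nbb.
  have e1 := hE a' b Ha' Hb (ltac:(by rewrite -fab)).
  have e2 := hE a b' Ha Hb' fbb.
  have e3 := hE a' b' Ha' Hb' fb'.
  move: (hc _ _ e1) (hc _ _ e2) (hc _ _ e3); rewrite fab.
  by case: (c (sg (f a'))); case: (c (sg (f b))); case: (c (sg (f b'))).
- move=> /existsPn nex.
  have nf : forall a b, a \in A -> b \in B -> f a != f b.
    move=> a b Ha Hb; have := nex a; move/existsPn/(_ b).
    by rewrite Ha Hb.
  apply: noK; exists [set sg (f x) | x in A], [set sg (f x) | x in B]; split.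
  + rewrite -setI_eq0; apply/eqP/setP => u; rewrite !inE.
    apply/negbTE/andP => -[/imsetP[a Ha ->] /imsetP[b Hb /perm_inj E]].
    by have := nf a b Ha Hb; rewrite E eqxx.
  + rewrite card_in_imset ?cA // => x y Hx Hy /perm_inj; exact: injA.
  + rewrite card_in_imset ?cB // => x y Hx Hy /perm_inj; exact: injB.
  + move=> u v /imsetP[a Ha ->] /imsetP[b Hb ->]; exact: (hE a b Ha Hb (nf a b Ha Hb)).
Qed.

Lemma sum_G (V : finType) (Gamma : rel V) k (F : rel 'I_k) (f : V -> 'I_k) :
  irreflexive F ->
  k`! * (Ncount Gamma * Ncount F) <=
  \sum_(sg : {perm 'I_k}) Ncount (Gs Gamma f F sg) * (k * k.-1).
Proof.
move=> irrF.
have -> : k`! * (Ncount Gamma * Ncount F) =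
    \sum_x \sum_y (Gamma x y : nat) * (k`! * Ncount F).
  rewrite mulnCA {1}/Ncount big_distrl /=; apply: eq_bigr => x _.
  by rewrite big_distrl.
have -> : \sum_(sg : {perm 'I_k}) Ncount (Gs Gamma f F sg) * (k * k.-1) =
    \sum_x \sum_y (\sum_(sg : {perm 'I_k}) (Gs Gamma f F sg x y : nat)) * (k * k.-1).
  rewrite (eq_bigr (fun sg => \sum_x \sum_y (Gs Gamma f F sg x y : nat) * (k * k.-1))); last first.
    move=> sg _; rewrite /Ncount big_distrl /=; apply: eq_bigr => x _; by rewrite big_distrl.
  rewrite exchange_big /=; apply: eq_bigr => x _; rewrite exchange_big /=.
  by apply: eq_bigr => y _; rewrite big_distrl.
apply: leq_sum => x _; apply: leq_sum => y _.
case: (boolP (Gamma x y)) => Gxy /=; last by rewrite mul0n.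
rewrite mul1n; case: (eqVneq (f x) (f y)) => fxy.
- have -> : \sum_(sg : {perm 'I_k}) (Gs Gamma f F sg x y : nat) = k`!.
    under eq_bigr do rewrite /Gs Gxy fxy eqxx /=.
    by rewrite sum_nat_const card_Sn muln1.
  by rewrite leq_mul2l (NF_le irrF) orbT.
- have -> : \sum_(sg : {perm 'I_k}) (Gs Gamma f F sg x y : nat) = Tab F (f x) (f y).
    by apply: eq_bigr => sg _; rewrite /Gs Gxy (negbTE fxy).
  by rewrite (Tab_val irrF fxy).
Qed.

Theorem lemma2p1 (V : finType) (Gamma : rel V) (k : nat)
  (F : rel 'I_k) (s r : nat) :
  simple_graph Gamma ->
  chromatic_number_is (compl_graph Gamma) k ->
  simple_graph F -> bipartite F ->
  2 <= s -> s <= r -> r != 2 ->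
  ~ contains_Ksr F s r ->
  exists G : rel V, subgraph G Gamma /\
    nedges Gamma * nedges F <= nedges G * 'C(k, 2) /\
    ~ contains_induced_Ksr G s r.
Proof.
move=> [symG irrG] [[f hf] _] [symF irrF] bipF s2 sr r2 noK.
have [sg Hsg] : exists sg : {perm 'I_k},
    Ncount Gamma * Ncount F <= Ncount (Gs Gamma f F sg) * (k * k.-1).
  apply/existsP; apply/contraT => /existsPn H.
  have H1 := sum_G Gamma f irrF.
  have H2 : \sum_(sg : {perm 'I_k}) (Ncount (Gs Gamma f F sg) * (k * k.-1) + 1)
      <= \sum_(sg : {perm 'I_k}) (Ncount Gamma * Ncount F).
    by apply: leq_sum => sg _; rewrite addn1 ltnNge H.
  move: H2; rewrite big_split /= !sum_nat_const card_Sn muln1 => H2.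
  have := leq_trans H2 H1; rewrite -[X in _ <= X]addn0 leq_add2l leqn0.
  by rewrite eqn0Ngt fact_gt0.
have symGs : symmetric (Gs Gamma f F sg).
  by move=> x y; rewrite /Gs symG eq_sym symF.
have irrGs : irreflexive (Gs Gamma f F sg) by move=> x; rewrite /Gs irrG.
exists (Gs Gamma f F sg); split; [split => //; by move=> x y /andP[] |split].
- have e1 := nedgesE symG irrG.
  have e2 := nedgesE symF irrF.
  have e3 := nedgesE symGs irrGs.
  have e4 : k * k.-1 = 2 * 'C(k, 2) by rewrite -mul_bin_diag bin1.
  rewrite -e1 -e2 -e3 e4 -!muln2 in Hsg.
  nia.
- by apply: no_induced; [exact: hf|exact: bipF|exact: s2|exact: sr|exact: r2|exact: noK].
Qed.
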